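(* Let $q$ be a prime power, $\xi$ a generator of the cyclic group $\mathbb{F}_q^*$, and $t\ge 2$ an integer. Let $A'_{t,q}$ be the $t\times\big(\binom{t}{2}(q-1)+t+q-2\big)$ matrix obtained from $A_{t,q}$ by appending $q-2$ columns whose first entries are $\xi,\xi^2,\dots,\xi^{q-2}$ respectively and whose other entries are $0$. Then the linear code $\mathcal{C}'$ generated by $A'_{t,q}$ is a minimal $\big[\binom{t}{2}(q-1)+t+q-2,\,t\big]_q$ code satisfying Property (P).
   Context: $A_{t,q}=(\mathbb{I}_t\mid \mathbb{B}_{t,q})$ is the $t\times\big(t+\binom{t}{2}(q-1)\big)$ matrix over $\mathbb{F}_q$, where $\mathbb{I}_t$ is the identity matrix and $\mathbb{B}_{t,q}$ has as columns exactly the vectors $e_i+\lambda e_j$, one for each pair $1\le i<j\le t$ and each $\lambda\in\mathbb{F}_q^*$. The code generated by a matrix is its row space. Property (P): every nonzero codeword $w=(w_1,\dots,w_n)$ satisfies $\{w_1,\dots,w_n\}=\mathbb{F}_q$. A linear code $\mathcal{C}$ is minimal if for all nonzero $c,c'\in\mathcal{C}$ whose supports (sets of nonzero coordinate indices) satisfy $\mathrm{Supp}(c')\subseteq\mathrm{Supp}(c)$, there is $\lambda\in\mathbb{F}_q^*$ with $c'=\lambda c$. *)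

(* Defs.v *)
From HB Require Import structures.
From mathcomp Require Import all_boot all_order all_algebra all_field.
Set Implicit Arguments. Unset Strict Implicit. Unset Printing Implicit Defensive.
Import GRing.Theory.
Local Open Scope ring_scope.

(* Column indices of A_{t,q}: identity columns 'I_t, then the columns of
   B_{t,q} indexed by triples (i, j, lambda) with i < j and lambda <> 0. *)
Notation pairIdx F t :=
  {p : 'I_t * 'I_t * F | ((p.1.1 < p.1.2)%N && (p.2 != 0))}.

Notation colIdx F t := ('I_t + pairIdx F t + 'I_(#|F| - 2))%type.

Definition colA' (F : finFieldType) (t : nat) (xi : F) (c : colIdx F t)
  : 'cV[F]_t :=
  match c with
  | inl (inl i) => \col_r (r == i)%:R
  | inl (inr p) => let: (i, j, l) := val p in
                   \col_r ((r == i)%:R + l * (r == j)%:R)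
  | inr k => \col_r (if val r == 0%N then xi ^+ k.+1 else 0)
  end.

Definition Aprime (F : finFieldType) (t : nat) (xi : F)
  : 'M[F]_(t, #|{: colIdx F t}|) :=
  \matrix_(r, j) colA' xi (enum_val j) r 0.

Definition in_code (F : fieldType) (k n : nat) (A : 'M[F]_(k, n)) (w : 'rV[F]_n) :=
  exists x : 'rV[F]_k, w = x *m A.

Definition supp (F : fieldType) (n : nat) (w : 'rV[F]_n) : {set 'I_n} :=
  [set j | w 0 j != 0].

Definition minimal_code (F : fieldType) (k n : nat) (A : 'M[F]_(k, n)) :=
  forall c c' : 'rV[F]_n, in_code A c -> in_code A c' -> c != 0 -> c' != 0 ->
    supp c' \subset supp c -> exists2 l : F, l != 0 & c' = l *: c.

Definition propertyP (F : finFieldType) (k n : nat) (A : 'M[F]_(k, n)) :=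
  forall w : 'rV[F]_n, in_code A w -> w != 0 ->
    forall a : F, exists j : 'I_n, w 0 j = a.

(* Main.v *)
Require Import Defs.
From HB Require Import structures.
From mathcomp Require Import all_boot all_order all_algebra all_field.
From mathcomp Require Import ring zify.
Import GRing.Theory.
Local Open Scope ring_scope.

Section Aux.
Variables (F : finFieldType) (t : nat) (xi : F).

Lemma sum_delta (x : 'rV[F]_t) (i : 'I_t) :
  \sum_r x 0 r * (r == i)%:R = x 0 i.
Proof.
rewrite (bigD1 i) //= eqxx mulr1 big1 ?addr0 // => r /negbTE ->; exact: mulr0.
Qed.

Lemma coordE (x : 'rV[F]_t) (c : colIdx F t) :
  (x *m Aprime t xi) 0 (enum_rank c) = \sum_r x 0 r * colA' xi c r 0.
Proof.
rewrite mxE; apply: eq_bigr => r _; by rewrite mxE enum_rankK.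
Qed.

Lemma coord_id (x : 'rV[F]_t) (i : 'I_t) :
  (x *m Aprime t xi) 0 (enum_rank (inl (inl i) : colIdx F t)) = x 0 i.
Proof.
rewrite coordE /= -(sum_delta x i); apply: eq_bigr => r _; by rewrite mxE.
Qed.

Lemma coord_pair (x : 'rV[F]_t) (i j : 'I_t) (l : F) (H : (i < j)%N && (l != 0)) :
  (x *m Aprime t xi) 0 (enum_rank (inl (inr (exist _ (i, j, l) H)) : colIdx F t))
   = x 0 i + l * x 0 j.
Proof.
rewrite coordE /= -(sum_delta x i) -(sum_delta x j) mulr_sumr -big_split /=.
apply: eq_bigr => r _; rewrite mxE; ring.
Qed.

Lemma coord_app (x : 'rV[F]_t) (k : 'I_(#|F| - 2)) (i0 : 'I_t) (hi0 : val i0 = 0%N) :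
  (x *m Aprime t xi) 0 (enum_rank (inr k : colIdx F t)) = x 0 i0 * xi ^+ k.+1.
Proof.
rewrite coordE /= (bigD1 i0) //= mxE hi0 eqxx big1 ?addr0 // => r hr.
rewrite mxE; case: eqP => [h|]; last by rewrite mulr0.
by case/eqP: hr; apply: val_inj; rewrite /= h hi0.
Qed.
End Aux.
Lemma sum_lt (t j : nat) : (\sum_(i < t) (i < j)%N = minn j t)%N.
Proof.
elim: t => [|t IH]; first by rewrite big_ord0; lia.
rewrite big_ord_recr /= IH; case: ltnP => h; lia.
Qed.

Lemma card_lt (t : nat) : #|[set ij : 'I_t * 'I_t | (ij.1 < ij.2)%N]| = 'C(t, 2).
Proof.
rewrite -sum1_card.
have -> : (\sum_(ij in [set ij : 'I_t * 'I_t | (ij.1 < ij.2)%N]) 1 =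
           \sum_(ij : 'I_t * 'I_t) (ij.1 < ij.2)%N)%N.
  rewrite big_mkcond /=; apply: eq_bigr => ij _; rewrite inE; by case: ifP.
rewrite -(pair_big xpredT xpredT (fun i j : 'I_t => (i < j)%N : nat)) /=.
rewrite (exchange_big _ _ _ xpredT xpredT) /=.
rewrite -bin2_sum big_mkord; apply: eq_bigr => j _.
rewrite sum_lt; have := ltn_ord j; lia.
Qed.

Lemma card_col (F : finFieldType) (t : nat) :
  #|{: colIdx F t}| = ('C(t, 2) * (#|F| - 1) + t + (#|F| - 2))%N.
Proof.
rewrite !card_sum !card_ord card_sig.
have -> : #|[pred p : 'I_t * 'I_t * F | (p.1.1 < p.1.2)%N && (p.2 != 0)]| =
   #|setX [set ij : 'I_t * 'I_t | (ij.1 < ij.2)%N] [set~ (0 : F)]|.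
  apply: eq_card => p; rewrite !inE; done.
by rewrite cardsX card_lt cardsC1 subn1 [(t + _)%N]addnC.
Qed.

Lemma rank_A (F : finFieldType) (t : nat) (xi : F) : \rank (Aprime t xi) = t.
Proof.
apply/eqP; change (row_free (Aprime t xi)); apply/row_freeP.
exists (\matrix_(j, r) (enum_val j == (inl (inl r) : colIdx F t))%:R).
apply/matrixP => i r; rewrite !mxE (bigD1 (enum_rank (inl (inl r) : colIdx F t))) //=.
rewrite big1 ?addr0.
  rewrite mxE enum_rankK !mxE enum_rankK eqxx mulr1.
  by case: (r == i).
move=> j hj; rewrite [X in _ * X]mxE.
have /negbTE -> : enum_val j != (inl (inl r) : colIdx F t).
  by apply: contra hj => /eqP <-; rewrite enum_valK.
by rewrite mulr0.
Qed.

Lemma row_nz (F : fieldType) (n : nat) (x : 'rV[F]_n) : x != 0 -> exists i, x 0 i != 0.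
Proof.
move=> hx; have : ~~ [forall i, x 0 i == 0].
  apply: contra hx => /forallP h; apply/eqP/rowP => i; rewrite mxE; exact/eqP.
by rewrite negb_forall => /existsP.
Qed.



Lemma minimal_aux (F : finFieldType) (t : nat) (xi : F) (x y : 'rV[F]_t) :
  x != 0 ->
  (forall c : colIdx F t, (x *m Aprime t xi) 0 (enum_rank c) = 0 ->
                          (y *m Aprime t xi) 0 (enum_rank c) = 0) ->
  exists l, y = l *: x.
Proof.
move=> /row_nz [i0 hi0] H.
exists (y 0 i0 / x 0 i0); apply/rowP => j; rewrite mxE.
have [hxj|hxj] := eqVneq (x 0 j) 0.
  have := H (inl (inl j)); rewrite !coord_id => ->; first by rewrite hxj mulr0.
  exact: hxj.
have [->|hji] := eqVneq j i0; first by rewrite divfK.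
case: (ltngtP i0 j) => hlt; last first.
- by case/eqP: hji; apply: val_inj.
- have hl : (j < i0)%N && (- (x 0 j / x 0 i0) != 0).
    by rewrite hlt /= oppr_eq0 mulf_neq0 // invr_eq0.
  have := H (inl (inr (exist _ (j, i0, - (x 0 j / x 0 i0)) hl))).
  rewrite !coord_pair => h.
  have {}h : y 0 j + - (x 0 j / x 0 i0) * y 0 i0 = 0.
    by apply: h; field; do ?[apply/andP; split]; done.
  have -> : y 0 j = x 0 j / x 0 i0 * y 0 i0.
    by apply/eqP; rewrite -subr_eq0; apply/eqP; rewrite -h; ring.
  by field; do ?[apply/andP; split]; done.
- have hl : (i0 < j)%N && (- (x 0 i0 / x 0 j) != 0).
    by rewrite hlt /= oppr_eq0 mulf_neq0 // invr_eq0.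
  have := H (inl (inr (exist _ (i0, j, - (x 0 i0 / x 0 j)) hl))).
  rewrite !coord_pair => h.
  have {}h : y 0 i0 + - (x 0 i0 / x 0 j) * y 0 j = 0.
    by apply: h; field; do ?[apply/andP; split]; done.
  have -> : y 0 i0 = x 0 i0 / x 0 j * y 0 j.
    by apply/eqP; rewrite -subr_eq0; apply/eqP; rewrite -h; ring.
  by field; do ?[apply/andP; split]; done.
Qed.

Lemma xi_order (F : finFieldType) (xi : F) : xi != 0 -> xi ^+ (#|F| - 1) = 1.
Proof.
move=> hxi; have hF : (0 < #|F|)%N by apply/card_gt0P; exists 0.
apply: (mulfI hxi); rewrite -exprS mulr1.
have -> : (#|F| - 1).+1 = #|F| by lia.
exact: expf_card.
Qed.

Lemma card_F_gt1 (F : finFieldType) : (1 < #|F|)%N.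
Proof. apply/card_gt1P; exists 0, 1; split => //; by rewrite eq_sym oner_neq0. Qed.

Lemma propP_aux (F : finFieldType) (t : nat) (xi : F) (x : 'rV[F]_t) :
  (2 <= t)%N -> xi != 0 -> (forall z : F, z != 0 -> exists k : nat, z = xi ^+ k) ->
  x != 0 -> forall a : F, exists c : colIdx F t, (x *m Aprime t xi) 0 (enum_rank c) = a.
Proof.
move=> ht hxi hgen hx a.
have h0 : (0 < t)%N by lia.
have h1 : (1 < t)%N by lia.
pose i0 := Ordinal h0; pose i1 := Ordinal h1.
have [/existsP [j /andP [hj hxj]] | hno] := boolP [exists j : 'I_t, (0 < j)%N && (x 0 j != 0)].
  have [ha|ha] := eqVneq a (x 0 i0).
    by exists (inl (inl i0)); rewrite coord_id ha.
  have hl : (i0 < j)%N && ((a - x 0 i0) / x 0 j != 0).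
    by rewrite hj /= mulf_neq0 // ?invr_eq0 // subr_eq0.
  exists (inl (inr (exist _ (i0, j, (a - x 0 i0) / x 0 j) hl))).
  rewrite coord_pair; field; done.
have hxi0 : x 0 i0 != 0.
  have [j hj] := @row_nz F t x hx.
  have [hj0|hj0] := posnP j.
    by have -> : i0 = j by apply: val_inj; rewrite /= hj0.
  by move: hno; rewrite negb_exists => /forallP /(_ j); rewrite hj0 hj.
have [->|ha] := eqVneq a 0.
  exists (inl (inl i1)); rewrite coord_id.
  by move: hno; rewrite negb_exists => /forallP /(_ i1) /=; rewrite negbK => /eqP.
have [k hk] := hgen (a / x 0 i0) (mulf_neq0 ha (invr_neq0 hxi0)).
have hF := card_F_gt1 F.
have hm : (k %% (#|F| - 1) < #|F| - 1)%N by apply: ltn_pmod; lia.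
move: hk; rewrite -(expr_mod _ (@xi_order F xi hxi)).
case hkm: (k %% (#|F| - 1))%N => [|m] hk.
  exists (inl (inl i0)); rewrite coord_id.
  by move: hk; rewrite expr0 => /(canRL (divfK hxi0)); rewrite mul1r => ->.
have hm' : (m < #|F| - 2)%N by lia.
exists (inr (Ordinal hm')); rewrite (@coord_app F t xi x (Ordinal hm') i0 erefl) -hk.
by field.
Qed.

Theorem mainTheorem7 (F : finFieldType) (xi : F) (t : nat)
  (ht : (2 <= t)%N)
  (hxi0 : xi != 0)
  (hgen : forall x : F, x != 0 -> exists k : nat, x = xi ^+ k) :
  #|{: colIdx F t}| = ('C(t, 2) * (#|F| - 1) + t + (#|F| - 2))%N /\
  \rank (Aprime t xi) = t /\
  minimal_code (Aprime t xi) /\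
  propertyP (Aprime t xi).
Proof.
split; first exact: card_col.
split; first exact: rank_A.
split.
  move=> c c' [x ->] [y ->] hc hc' hs.
  have hx : x != 0 by apply: contra hc => /eqP ->; rewrite mul0mx.
  have [l hl] : exists l, y = l *: x.
    apply: (@minimal_aux F t xi x y hx) => d hd; have h := subsetP hs (enum_rank d).
    rewrite !inE hd eqxx /= in h; apply/eqP; apply/negPn/negP => /h; done.
  exists l; last by rewrite hl scalemxAl.
  by apply: contra hc' => /eqP hl0; rewrite hl hl0 scale0r mul0mx.
move=> w [x ->] hw a.
have hx : x != 0 by apply: contra hw => /eqP ->; rewrite mul0mx.
have [c hc] := @propP_aux F t xi x ht hxi0 hgen hx a.
by exists (enum_rank c).
Qed.
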